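(* Let $n$ be a large positive integer, let $\sigma>0$ and $\delta>0$ be constants, let $d=\delta\left(\frac{\log n}{\log\log n}\right)^{1/3}$ (a positive integer), and let $a,b$ be integers with $0\le a<b\le \frac12 L_n\!\left(\frac13,\sigma\right)$ and $\gcd(a,b)=1$. Define $\varphi=\varphi_{a,b}:\mathbb{Z}^d\to\mathbb{Z}$ by $$\varphi\big((v_0,\ldots,v_{d-1})\big)=\sum_{i=0}^{d-1}v_i\,a^{d-i-1}b^i .$$ Then there exists a set $S\subseteq \mathbb{I}\!\left(4L_n\!\left(\frac13,\sigma\right)\right)^d$ such that $\varphi$ restricted to $S$ is a bijection from $S$ onto $\mathbb{I}(b^{d-1})$.
   Context: For $x,\alpha,c\in\mathbb{R}$, $L_x(\alpha,c)=\exp\!\big(c(\log x)^{\alpha}(\log\log x)^{1-\alpha}\big)$. For $L>0$, $\mathbb{I}(L)=\left[-\frac12 L,\frac12 L\right)\cap\mathbb{Z}$ denotes the zero-centred half-open integer interval of length $L$. *)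

(* Defs.v *)
From mathcomp Require Import all_boot all_order all_algebra.
From mathcomp Require Import all_classical all_reals all_analysis.
From mathcomp Require Export Rstruct.
Set Implicit Arguments. Unset Strict Implicit. Unset Printing Implicit Defensive.
Import Order.TTheory GRing.Theory Num.Theory.
Local Open Scope ring_scope.
Local Open Scope classical_set_scope.

Notation R := Rdefinitions.R.

Definition Lnx (x alpha c : R) : R :=
  expR (c * (ln x `^ alpha) * (ln (ln x) `^ (1 - alpha))).

Definition Iint (L : R) : set int :=
  [set z : int | - (L / 2) <= (z%:~R : R) /\ (z%:~R : R) < L / 2].

Definition phi (d : nat) (a b : int) (v : {ffun 'I_d -> int}) : int :=
  \sum_(i < d) v i * a ^+ (d - i - 1)%N * b ^+ i.

Definition Ibox (d : nat) (L : R) : set {ffun 'I_d -> int} :=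
  [set v | forall i : 'I_d, Iint L (v i)].
Arguments Ibox : clear implicits.

(* Main.v *)
Require Import Defs.
From mathcomp Require Import all_boot all_order all_algebra.
From mathcomp Require Import all_classical all_reals all_analysis.
From mathcomp Require Import zify ring lra.
Import Order.TTheory GRing.Theory Num.Theory.
Local Open Scope ring_scope.
Local Open Scope classical_set_scope.
Lemma step (A B b m : int) : 0 <= A -> A <= B -> 0 < b -> coprimez A b ->
  2 * `|m| <= b * B ->
  exists v0 q : int, m = v0 * A + b * q /\ `|v0| <= b /\ 2 * `|q| <= B.
Proof.
move=> hA hAB hb cop hm.
have [u [w huw]] := Bezoutz A b.
move/eqP: cop => cop; rewrite cop in huw.
set r := ((m * u) %% b)%Z.
have r0 : 0 <= r by apply: modz_ge0; lia.
have rb : r < b by apply: ltz_pmod.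
have hdiv := divz_eq (m * u) b.
set k := ((m * u) %/ b)%Z in hdiv.
set q := k * A + m * w.
have hq : m = r * A + b * q.
  have -> : m = m * (u * A + w * b) by rewrite huw mulr1.
  rewrite /q; have : m * u = k * b + r by exact: hdiv.
  move=> e; rewrite mulrDr mulrA e; ring.
have rA0 : 0 <= r * A by exact: mulr_ge0.
have rA1 : r * A <= b * A by rewrite ler_wpM2r // ltW.
have mm : `|m| >= m /\ `|m| >= - m by split; [apply: ler_norm | rewrite -normrN; apply: ler_norm].
have e : b * (2 * q) = 2 * m - 2 * (r * A) by rewrite hq; ring.
have h1 : 2 * q <= B.
  have : b * (2 * q) <= b * B by rewrite e; lia.
  by rewrite ler_pM2l.
have h2 : - B - 2 * A <= 2 * q.
  have e2 : b * (- B - 2 * A) = - (b*B) - 2*(b*A) by ring.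
  have : b * (- B - 2 * A) <= b * (2 * q) by rewrite e2 e; lia.
  by rewrite ler_pM2l.
case: (lerP (- B) (2 * q)) => h3.
  exists r, q; split => //; split; lia.
exists (r - b), (q + A); split; first by rewrite hq; ring.
split; lia.
Qed.

Lemma phiS j (a b : int) (v : {ffun 'I_j.+2 -> int}) :
  phi a b v = v ord0 * a ^+ j.+1 + b * phi a b [ffun i : 'I_j.+1 => v (lift ord0 i)].
Proof.
rewrite /phi big_ord_recl /= subn0 subn1 /= expr0 mulr1; congr (_ + _).
rewrite mulr_sumr; apply: eq_bigr => i _; rewrite ffunE /= /bump /= add1n subSS exprS.
ring.
Qed.

Lemma rep (a b : int) : 0 <= a -> a <= b -> 0 < b -> coprimez a b ->
  forall j (m : int), 2 * `|m| <= b ^+ j.+1 ->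
  exists v : {ffun 'I_j.+1 -> int}, (forall i, `|v i| <= b) /\ phi a b v = m.
Proof.
move=> ha hab hb cop; elim=> [|j IH] m hm.
  exists [ffun _ => m]; split => [i|].
    rewrite ffunE; have : 2 * `|m| <= b by rewrite expr1 in hm.
    have := normr_ge0 m; lia.
  by rewrite /phi big_ord1 ffunE /= expr0 !mulr1.
have h1 : 0 <= a ^+ j.+1 by exact: exprn_ge0.
have h2 : a ^+ j.+1 <= b ^+ j.+1 by rewrite lerXn2r // ?nnegrE // (le_trans ha hab).
have h4 : coprimez (a ^+ j.+1) b by exact: coprimezXl.
have h5 : 2 * `|m| <= b * b ^+ j.+1 by rewrite -exprS.
have [v0 [q [hmq [hv0 hq]]]] := @step _ _ _ m h1 h2 hb h4 h5.
have [v [hv hphi]] := IH q hq.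
exists [ffun i : 'I_j.+2 => if unlift ord0 i is Some k then v k else v0]; split.
  move=> i; rewrite ffunE; case: unliftP => [k _|_] //.
rewrite phiS ffunE unlift_none hmq; congr (_ + b * _).
rewrite -hphi; congr phi; apply/ffunP => i; rewrite !ffunE liftK //.
Qed.

Theorem lemma5p6 (sigma delta : R) :
  0 < sigma -> 0 < delta ->
  exists N : nat, forall n : nat, (N <= n)%N ->
  forall d : nat, (0 < d)%N ->
  (d%:R : R) = delta * (ln (n%:R : R) / ln (ln (n%:R : R))) `^ (3^-1) ->
  forall a b : int, 0 <= a -> a < b ->
  (b%:~R : R) <= Lnx n%:R (3^-1) sigma / 2 ->
  gcdz a b = 1 ->
  exists S : set {ffun 'I_d -> int},
    S `<=` Ibox d (4 * Lnx n%:R (3^-1) sigma) /\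
    (forall v, S v -> Iint ((b ^+ d.-1)%:~R) (phi a b v)) /\
    (forall v w, S v -> S w -> phi a b v = phi a b w -> v = w) /\
    (forall m, Iint ((b ^+ d.-1)%:~R) m -> exists2 v, S v & phi a b v = m).
Proof.
move=> _ _; exists 0%N => n _ d d0 _ a b ha hab hbL hg.
set L := Lnx _ _ _ in hbL *.
have hb : 0 < b by lia.
have cop : coprimez a b by rewrite /coprimez hg.
have H : forall m : int, exists v : {ffun 'I_d -> int},
    Iint ((b ^+ d.-1)%:~R) m -> (forall i, `|v i| <= b) /\ phi a b v = m.
  move=> m; case: d d0 => [//|d'] _ /=.
  have [hm|hm] := boolp.pselect (Iint ((b ^+ d')%:~R) m); last first.
    by exists [ffun _ => 0].
  case: hm => hm1 hm2.
  have e1 : ((- (b ^+ d')) : int)%:~R <= (m + m)%:~R :> R by rewrite intrN intrD; lra.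
  have e2 : (m + m)%:~R < (b ^+ d')%:~R :> R by rewrite intrD; lra.
  rewrite ler_int in e1; rewrite ltr_int in e2.
  have e3 : b ^+ d' <= b ^+ d'.+1.
    rewrite exprS; have := exprn_ge0 d' (ltW hb); nia.
  have e4 : 2 * `|m| <= b ^+ d'.+1.
    have [m0|m0] := lerP 0 m.
      rewrite ger0_norm //; lia.
    rewrite ltr0_norm //; lia.
  have [v hv] := @rep a b ha (ltW hab) hb cop d' m e4.
  by exists v.
have [f hf] := boolp.choice H.
exists [set v | exists2 m, Iint ((b ^+ d.-1)%:~R) m & v = f m].
split; [|split; [|split]].
- move=> _ [m hm ->] i; have [hv _] := hf m hm.
  have := hv i; set z := f m i => hz.
  have z1 : (z%:~R : R) <= b%:~R by rewrite ler_int; have := ler_norm z; lia.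
  have z2 : ((- b) : int)%:~R <= (z%:~R : R) by rewrite ler_int; have := ler_norm (- z); rewrite normrN; lia.
  rewrite intrN in z2.
  have b1 : (1 : R) <= b%:~R by rewrite (_ : 1 = 1%:~R) // ler_int; lia.
  rewrite /Iint /=; split; lra.
- by move=> _ [m hm ->]; have [_ ->] := hf m hm.
- move=> _ _ [m hm ->] [m' hm' ->].
  by have [_ ->] := hf m hm; have [_ ->] := hf m' hm' => ->.
- move=> m hm; exists (f m); first by exists m.
  by have [_ ->] := hf m hm.
Qed.
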